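(* Let $O$ be the regular octahedron in $\mathbb{R}^3$, with its $6$ vertices and $12$ edges, and let $G_O$ be its rotation group (isomorphic to $S_4$, of order $24$). The number of $G_O$-orbits of incomplete open octahedra (as defined in the context) is exactly $185$.
   Context: Let $P$ be a convex polyhedron in $\mathbb{R}^3$ with vertex set $V$ and edge set $E$ (each edge a pair of vertices). For a subset $S\subseteq E$, let $V(S)$ be the set of vertices incident to at least one edge of $S$, and let $\Gamma(S)$ be the graph with vertex set $V(S)$ and edge set $S$. An incomplete open $P$ is a subset $S\subseteq E$ such that: (i) $S\neq\emptyset$ and $S\neq E$; (ii) $\Gamma(S)$ is connected; (iii) $S$ is non-planar, i.e. the points of $V(S)$ (as points of $\mathbb{R}^3$) are not all contained in a single affine plane. The rotation group of $P$ (orientation-preserving isometries of $\mathbb{R}^3$ mapping $P$ to itself) permutes $V$ and $E$, and hence acts on subsets of $E$; this action preserves the property of being an incomplete open $P$. Incomplete open $P$ are counted up to this action, i.e. one counts orbits; two mirror-image subsets not related by a rotation are counted separately. *)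

(* Defs.v *)
From HB Require Import structures.
From mathcomp Require Import all_boot all_order all_algebra fingroup perm.
From mathcomp Require Import boolp reals.
Set Implicit Arguments. Unset Strict Implicit. Unset Printing Implicit Defensive.
Import Order.TTheory GRing.Theory Num.Theory.
Local Open Scope ring_scope.

(* Regular octahedron O = conv{±e1, ±e2, ±e3}.  Vertices are indexed by 'I_6:
   vertex i lies on axis i./2, with sign + if i is even and - if i is odd.   *)
Definition oct_vert (R : realType) (i : 'I_6) : 'rV[R]_3 :=
  \row_(k < 3) (if (k : nat) == (i : nat)./2 then (if odd i then -1 else 1) else 0).

(* Edges of O: unordered pairs {i,j} of distinct, non-antipodal vertices
   (antipodal = same axis).  There are 12 of them. *)
Definition oct_edges : {set {set 'I_6}} :=
  [set e : {set 'I_6} | [exists i : 'I_6, exists j : 'I_6,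
      (e == [set i; j]) && ((i : nat)./2 != (j : nat)./2)]].

Definition Vset (S : {set {set 'I_6}}) : {set 'I_6} := \bigcup_(e in S) e.

Definition adjS (S : {set {set 'I_6}}) : rel 'I_6 :=
  fun x y => [set x; y] \in S.

Definition Gamma_connected (S : {set {set 'I_6}}) : Prop :=
  forall x y, x \in Vset S -> y \in Vset S -> connect (adjS S) x y.

Definition dotR (R : realType) (u v : 'rV[R]_3) : R := \sum_(k < 3) u 0 k * v 0 k.

Definition planar (R : realType) (S : {set {set 'I_6}}) : Prop :=
  exists (n : 'rV[R]_3) (c : R),
    n != 0 /\ forall i, i \in Vset S -> dotR n (oct_vert R i) = c.

Definition incomplete_open (R : realType) (S : {set {set 'I_6}}) : Prop :=
  [/\ S \subset oct_edges, S != set0, S != oct_edges,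
      Gamma_connected S & ~ planar R S].

Definition is_rotation (R : realType) (g : {perm 'I_6}) : Prop :=
  exists (M : 'M[R]_3) (b : 'rV[R]_3),
    [/\ M *m M^T = 1%:M, \det M = 1 &
        forall i, oct_vert R i *m M + b = oct_vert R (g i)].

Definition rotations (R : realType) : {set {perm 'I_6}} :=
  [set g | `[< is_rotation R g >]].

Definition act_edges (g : {perm 'I_6}) (S : {set {set 'I_6}}) : {set {set 'I_6}} :=
  [set g @: (e : {set 'I_6}) | e in S].

Definition rot_orbit (R : realType) (S : {set {set 'I_6}}) : {set {set {set 'I_6}}} :=
  [set act_edges g S | g in rotations R].

Definition incomplete_opens (R : realType) : {set {set {set 'I_6}}} :=
  [set S | `[< incomplete_open R S >]].

(* Main.v *)
Require Import Defs.
From HB Require Import structures.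
From mathcomp Require Import all_boot all_order all_algebra fingroup perm.
From mathcomp Require Import boolp reals.
From mathcomp Require Import ring lra zify.
Set Implicit Arguments. Unset Strict Implicit. Unset Printing Implicit Defensive.
Import Order.TTheory GRing.Theory Num.Theory.

Definition pairs : seq (nat * nat) :=
  [:: (0,2);(0,3);(0,4);(0,5);(1,2);(1,3);(1,4);(1,5);(2,4);(2,5);(3,4);(3,5)]%N.
Definition eidx (x y : nat) : nat := index (minn x y, maxn x y) pairs.
Definition adjb (m : seq bool) (x y : nat) : bool :=
  (x./2 != y./2) && nth false m (eidx x y).
Definition vb m x := has (adjb m x) (iota 0 6).
Fixpoint allbl (n : nat) : seq (seq bool) :=
  if n is n'.+1 then [seq b :: s | b <- [:: false; true], s <- allbl n'] else [:: [::]].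
Definition nocut m :=
  let V := [seq vb m i | i <- iota 0 6] in
  let E := [seq p <- pairs | adjb m p.1 p.2] in
  all (fun A : seq bool => ~~ [&& has (fun i => nth false A i && nth false V i) (iota 0 6),
        has (fun i => ~~ nth false A i && nth false V i) (iota 0 6) &
        ~~ has (fun p => nth false A p.1 != nth false A p.2) E])
   (allbl 6).
Definition nonpl m :=
  has (fun k => vb m k.*2 && vb m k.*2.+1) (iota 0 3) && all (fun k => vb m k.*2 || vb m k.*2.+1) (iota 0 3).
Definition good m := [&& has id m, ~~ all id m, nocut m & nonpl m].
Definition samepair (p q : nat * nat) :=
  ((p.1 == q.1) && (p.2 == q.2)) || ((p.1 == q.2) && (p.2 == q.1)).
Definition actf (f : seq nat) (m : seq bool) : seq bool :=
  let E := [seq q <- pairs | adjb m q.1 q.2] in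
  [seq has (fun q => samepair (nth 0 f q.1, nth 0 f q.2) p) E | p <- pairs].
Definition xor1 (a : nat) := if odd a then a.-1 else a.+1.
Definition antip (f : seq nat) := all (fun k => nth 0 f k.*2.+1 == xor1 (nth 0 f k.*2)) (iota 0 3).
Definition d33 (R : comPzRingType) (a : nat -> nat -> R) : R :=
  (a 0 0 * a 1 1 * a 2 2 + a 0 1 * a 1 2 * a 2 0 + a 0 2 * a 1 0 * a 2 1
  - a 0 2 * a 1 1 * a 2 0 - a 0 0 * a 1 2 * a 2 1 - a 0 1 * a 1 0 * a 2 2)%R.
Definition vz (R : pzRingType) (a l : nat) : R := if l == a./2 then (if odd a then -1 else 1)%R else 0%R.
Definition detZ (f : seq nat) : int := d33 (fun k l => vz int (nth 0 f k.*2) l).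
Definition gl := [seq f <- permutations (iota 0 6) | antip f && (detZ f == 1%R)].
Definition glc : seq (seq nat) := [:: [:: 2; 3; 1; 0; 4; 5]; [:: 3; 2; 0; 1; 4; 5];
           [:: 1; 0; 3; 2; 4; 5]; [:: 0; 1; 2; 3; 4; 5];
           [:: 3; 2; 1; 0; 5; 4]; [:: 2; 3; 0; 1; 5; 4];
           [:: 0; 1; 3; 2; 5; 4]; [:: 1; 0; 2; 3; 5; 4];
           [:: 0; 1; 5; 4; 2; 3]; [:: 1; 0; 4; 5; 2; 3];
           [:: 5; 4; 1; 0; 2; 3]; [:: 4; 5; 0; 1; 2; 3];
           [:: 4; 5; 1; 0; 3; 2]; [:: 5; 4; 0; 1; 3; 2];
           [:: 0; 1; 4; 5; 3; 2]; [:: 1; 0; 5; 4; 3; 2];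
           [:: 4; 5; 3; 2; 0; 1]; [:: 5; 4; 2; 3; 0; 1];
           [:: 3; 2; 5; 4; 0; 1]; [:: 2; 3; 4; 5; 0; 1];
           [:: 3; 2; 4; 5; 1; 0]; [:: 2; 3; 5; 4; 1; 0];
           [:: 4; 5; 2; 3; 1; 0]; [:: 5; 4; 3; 2; 1; 0]].
Lemma gl_eq : gl = glc. Proof. by vm_compute. Qed.

Section Lex.
Variables (T : eqType) (r : rel T).
Fixpoint lexr (s t : seq T) : bool :=
  match s, t with
  | [::], _ => true
  | _ :: _, [::] => false
  | a :: s', b :: t' => if a == b then lexr s' t' else r a b
  end.
Fixpoint adjd (s : seq T) : seq T :=
  match s with
  | x :: ((y :: _) as s') => if x == y then adjd s' else x :: adjd s'
  | _ => s
  end.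
End Lex.
Definition lexb := lexr implb.
Definition cc m := sort lexb (undup [seq actf f m | f <- glc]).

Lemma size_pairs : size pairs = 12. Proof. by []. Qed.
Lemma pairs_ok p : p \in pairs -> [&& p.1 < 6, p.2 < 6 & p.1./2 != p.2./2].
Proof. by move=> /(nthP (0,0)) [k]; rewrite size_pairs; do 12?[case: k => [|k]] => //= _ <-. Qed.
Lemma eidx_ok x y : x < 6 -> y < 6 -> x./2 != y./2 ->
  eidx x y < 12 /\ nth (0,0) pairs (eidx x y) = (minn x y, maxn x y).
Proof. by do 6?[case: x => [|x]] => //; do 6?[case: y => [|y]]. Qed.
Lemma eidx_nth k : k < 12 -> eidx (nth (0,0) pairs k).1 (nth (0,0) pairs k).2 = k.
Proof. by do 12?[case: k => [|k]]. Qed.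
Lemma eidxC x y : eidx x y = eidx y x.
Proof. by rewrite /eidx minnC maxnC. Qed.
Lemma adjbC m x y : adjb m x y = adjb m y x.
Proof. by rewrite /adjb eidxC eq_sym. Qed.

Definition enc (m : seq bool) : {set {set 'I_6}} :=
  [set e : {set 'I_6} | [exists i : 'I_6, exists j : 'I_6, (e == [set i; j]) && adjb m i j]].

Lemma set2_eq (x y i j : 'I_6) : [set x; y] = [set i; j] -> (i = x /\ j = y) \/ (i = y /\ j = x).
Proof.
move=> E.
have hi : i \in [set x; y] by rewrite E !inE eqxx.
have hj : j \in [set x; y] by rewrite E !inE eqxx orbT.
have hx : x \in [set i; j] by rewrite -E !inE eqxx.
have hy : y \in [set i; j] by rewrite -E !inE eqxx orbT.
rewrite !inE in hi hj hx hy.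
case/orP: hi => /eqP ei; case/orP: hj => /eqP ej; subst.
- by move: hy; rewrite orbb => /eqP ->; left.
- by left.
- by right.
- by move: hx; rewrite orbb => /eqP ->; right.
Qed.

Lemma in_enc m (x y : 'I_6) : ([set x; y] \in enc m) = adjb m x y.
Proof.
rewrite inE; apply/existsP/idP => [[i /existsP [j /andP [/eqP E h]]]|h].
  by case: (set2_eq E) => [[? ?]|[? ?]]; subst => //; rewrite adjbC.
by exists x; apply/existsP; exists y; rewrite eqxx.
Qed.

Lemma encP m e : reflect (exists i j : 'I_6, e = [set i; j] /\ adjb m i j) (e \in enc m).
Proof.
rewrite inE; apply: (iffP existsP) => [[i /existsP [j /andP [/eqP E h]]]|[i [j [E h]]]].
  by exists i, j.
by exists i; apply/existsP; exists j; rewrite E eqxx.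
Qed.

Lemma adjb_lt m x y : adjb m x y -> x./2 != y./2.
Proof. by case/andP. Qed.

Lemma enc_sub m : enc m \subset oct_edges.
Proof.
apply/subsetP => e /encP [i [j [-> h]]]; rewrite inE; apply/existsP; exists i.
by apply/existsP; exists j; rewrite eqxx (adjb_lt h).
Qed.

Lemma Vset_enc m (i : 'I_6) : (i \in Vset (enc m)) = vb m i.
Proof.
apply/bigcupP/hasP => [[e /encP [a [b [-> h]]]]|[y]].
  rewrite !inE => /orP [] /eqP ->.
    by exists (val b); rewrite ?mem_iota ?ltn_ord.
  by exists (val a); rewrite ?mem_iota ?ltn_ord // adjbC.
rewrite mem_iota /= => ylt h.
exists [set i; Ordinal ylt]; last by rewrite !inE eqxx.
by rewrite in_enc.
Qed.

Lemma nth_enc m k : k < 12 ->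
  nth false m k = ([set inord (nth (0,0) pairs k).1; inord (nth (0,0) pairs k).2] \in enc m).
Proof.
move=> kl; rewrite in_enc.
have /and3P [h1 h2 h3] := pairs_ok (mem_nth (0,0) (kl : k < size pairs)).
by rewrite /adjb !inordK // h3 eidx_nth.
Qed.

Lemma mem_allbl n s : (s \in allbl n) = (size s == n).
Proof.
have memc c b (t : seq bool) L : (b :: t \in map (cons c) L) = (b == c) && (t \in L).
  by apply/mapP/andP => [[x xL [-> ->]]|[/eqP -> tL]]; [split|exists t].
elim: n s => [|n IH] s; first by case: s.
rewrite /= !mem_cat in_nil orbF.
case: s => [|b s] /=.
  by apply/negbTE; apply/orP => [[]] /mapP [].
by rewrite !memc IH; case: b; rewrite /= ?orbF.
Qed.

Lemma enc_inj m m' : size m = 12 -> size m' = 12 -> enc m = enc m' -> m = m'.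
Proof.
move=> sm sm' E; apply: (@eq_from_nth _ false); first by rewrite sm sm'.
by move=> k; rewrite sm => kl; rewrite !nth_enc // E.
Qed.

Lemma adjb_nth m (x y : 'I_6) : adjb m x y -> eidx x y < 12 /\ nth false m (eidx x y).
Proof. by case/andP => h1 h2; have [] := eidx_ok (ltn_ord x) (ltn_ord y) h1. Qed.

Lemma enc0 m : size m = 12 -> (enc m != set0) = has id m.
Proof.
move=> sm; apply/set0Pn/hasP => [[e /encP [i [j [_ /adjb_nth [h1 h2]]]]]|[b /(nthP false) [k]]].
  by exists (nth false m (eidx i j)) => //; apply: mem_nth; rewrite sm.
by rewrite sm => kl <- /= hk; exists [set (inord (nth (0,0) pairs k).1 : 'I_6); inord (nth (0,0) pairs k).2]; rewrite -nth_enc.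
Qed.

Lemma oct_edgesP e : reflect (exists i j : 'I_6, e = [set i; j] /\ i./2 != j./2) (e \in oct_edges).
Proof.
rewrite inE; apply: (iffP existsP) => [[i /existsP [j /andP [/eqP E h]]]|[i [j [E h]]]].
  by exists i, j.
by exists i; apply/existsP; exists j; rewrite E eqxx.
Qed.

Lemma encT m : size m = 12 -> (enc m == oct_edges) = all id m.
Proof.
move=> sm; apply/eqP/allP => [E b /(nthP false) [k]|h].
  rewrite sm => kl <-; rewrite nth_enc // E.
  have /and3P [h1 h2 h3] := pairs_ok (mem_nth (0,0) (kl : k < size pairs)).
  by apply/oct_edgesP; do 2 eexists; split; first reflexivity; rewrite !inordK.
apply/setP => e; apply/encP/oct_edgesP => [[i [j [-> /andP [h' _]]]]|[i [j [-> h']]]].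
  by exists i, j.
exists i, j; split => //; rewrite /adjb h' /=; apply: h.
have [h1 _] := eidx_ok (ltn_ord i) (ltn_ord j) h'.
by apply: mem_nth; rewrite sm.
Qed.

Definition mask (S : {set {set 'I_6}}) : seq bool :=
  [seq [set (inord p.1 : 'I_6); inord p.2] \in S | p <- pairs].

Lemma size_mask (S : {set {set 'I_6}}) : size (mask S) = 12. Proof. by rewrite size_map. Qed.

Lemma minmax_set2 (i j : 'I_6) :
  [set (inord (minn i j) : 'I_6); inord (maxn i j)] = [set i; j].
Proof.
case: (leqP i j) => h.
  by rewrite !inord_val.
by rewrite !inord_val setUC.
Qed.

Lemma nth_mask (S : {set {set 'I_6}}) (i j : 'I_6) : i./2 != j./2 ->
  nth false (mask S) (eidx i j) = ([set i; j] \in S).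
Proof.
move=> h; have [h1 h2] := eidx_ok (ltn_ord i) (ltn_ord j) h.
by rewrite (nth_map (0,0)) ?size_pairs // h2 /= minmax_set2.
Qed.

Lemma enc_mask (S : {set {set 'I_6}}) : S \subset oct_edges -> enc (mask S) = S.
Proof.
move=> /subsetP sub; apply/setP => e; apply/encP/idP => [[i [j [-> /andP [h1 h2]]]]|eS].
  by rewrite -nth_mask.
have /oct_edgesP [i [j [E h]]] := sub _ eS.
by exists i, j; split => //; rewrite /adjb h nth_mask // -E.
Qed.

Definition erel m : rel 'I_6 := fun a b => adjb m a b.

Lemma adjb_minmax m x y : adjb m (minn x y) (maxn x y) = adjb m x y.
Proof. by case: (leqP x y) => h; rewrite ?(minn_idPl h) ?(maxn_idPr h) ?(minn_idPr (ltnW h)) ?(maxn_idPl (ltnW h)) // adjbC. Qed.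

Lemma nth_mapiota (T : Type) (x0 : T) (f : nat -> T) n i : i < n -> nth x0 [seq f i | i <- iota 0 n] i = f i.
Proof. by move=> h; rewrite (nth_map 0) ?size_iota // nth_iota. Qed.

Lemma conn_enc m : Gamma_connected (enc m) <-> nocut m.
Proof.
have esym : symmetric (erel m) by move=> a b; rewrite /erel adjbC.
have eqc : adjS (enc m) =2 erel m by move=> a b; rewrite /adjS in_enc.
split => [hc|nc].
  apply/allP => A _; apply/negP => /and3P [/hasP [i + /andP [Ai Vi]] /hasP [j + /andP [nAj Vj]] /hasPn nocross].
  rewrite !mem_iota /= => ilt jlt.
  rewrite nth_mapiota // in Vi; rewrite nth_mapiota // in Vj.
  have := hc (Ordinal ilt) (Ordinal jlt); rewrite !Vset_enc => /(_ Vi Vj).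
  rewrite (eq_connect eqc) => con.
  have cl : closed (erel m) [pred z : 'I_6 | nth false A z].
    move=> z w ezw; rewrite !inE.
    have [h1 h2] := adjb_nth ezw.
    have pE : nth (0,0) pairs (eidx z w) \in [seq p <- pairs | adjb m p.1 p.2].
      by rewrite mem_filter mem_nth // (eidx_ok (ltn_ord z) (ltn_ord w) (adjb_lt ezw)).2 /= adjb_minmax andbT.
    have := nocross _ pE; rewrite (eidx_ok (ltn_ord z) (ltn_ord w) (adjb_lt ezw)).2 /= negbK => /eqP.
    by case: (leqP z w) => h; rewrite ?(minn_idPl h) ?(maxn_idPr h) ?(minn_idPr (ltnW h)) ?(maxn_idPl (ltnW h)).
  have := closed_connect cl con; rewrite !inE /= => E.
  by move: nAj; rewrite -E Ai.
move=> x y; rewrite !Vset_enc => Vx Vy; rewrite (eq_connect eqc).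
apply/negPn/negP => ncon.
pose A := [seq connect (erel m) x (inord i) | i <- iota 0 6].
have := allP nc A; rewrite mem_allbl size_map size_iota => /(_ isT) /negP; apply.
have nA (i : 'I_6) : nth false A i = connect (erel m) x i by rewrite nth_mapiota // inord_val.
apply/and3P; split.
- apply/hasP; exists (val x); first by rewrite mem_iota ltn_ord.
  by rewrite nA nth_mapiota ?ltn_ord // Vx andbT; apply: connect0.
- apply/hasP; exists (val y); first by rewrite mem_iota ltn_ord.
  by rewrite nA nth_mapiota ?ltn_ord // ncon.
apply/hasPn => p; rewrite mem_filter => /andP [ep pp].
have /and3P [h1 h2 _] := pairs_ok pp.
rewrite !nth_mapiota // negbK.
have e12 : erel m (inord p.1) (inord p.2) by rewrite /erel !inordK.
apply/eqP; apply/idP/idP => h.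
  exact: connect_trans h (connect1 e12).
by apply: connect_trans h (connect1 _); rewrite esym.
Qed.

Lemma half6 i : i < 6 -> i./2 < 3.
Proof. by do 6?[case: i => [|i]]. Qed.

Lemma vert_entry (R : realType) (i : 'I_6) (l : 'I_3) :
  oct_vert R i 0%R l = vz R i l.
Proof. by rewrite /oct_vert mxE. Qed.

Lemma dot_vert (R : realType) (n : 'rV[R]_3) (i : 'I_6) :
  dotR n (oct_vert R i) = ((if odd i then -1 else 1) * n 0%R (inord (i./2)))%R.
Proof.
have hl := half6 (ltn_ord i).
rewrite /dotR (bigD1 (inord (i./2))) //= big1 ?addr0 => [|k hk].
  by rewrite vert_entry /vz inordK // eqxx mulrC.
rewrite vert_entry /vz; case: eqP => [hk'|]; last by rewrite mulr0.
by move: hk; rewrite -hk' inord_val eqxx.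
Qed.

Lemma oddhalf a : a = (odd a + (a./2).*2)%N.
Proof. by rewrite odd_double_half. Qed.

Lemma planar_enc (R : realType) m : planar R (enc m) <-> ~~ nonpl m.
Proof.
split.
  case=> n [c [nz H]].
  have Hn k (b : bool) : k < 3 -> vb m (b + k.*2) -> ((if b then -1 else 1) * n 0 (inord k))%R = c.
    move=> kl hv.
    have al : b + k.*2 < 6 by rewrite -addnn; case: (b); lia.
    have := H (inord (b + k.*2)); rewrite Vset_enc inordK // => /(_ hv).
    rewrite dot_vert inordK // oddD odd_double addbF oddb.
    rewrite half_bit_double.
    by case: (b).
  apply/negP => /andP [/hasP [k + /andP [v0 v1]] /allP hall].
  rewrite mem_iota /= => kl.
  have e0 := Hn k false kl v0; have e1 := Hn k true kl v1.
  have c0 : c = 0%R by lra.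
  have nj j : j < 3 -> (n 0 (inord j) = 0)%R.
    move=> jl; have := hall j; rewrite mem_iota /= => /(_ jl) /orP [h|h].
      by have := Hn j false jl h; lra.
    by have := Hn j true jl h; lra.
  move/negP: nz; apply; apply/eqP/rowP => j; rewrite !mxE.
  by rewrite -(nj j (ltn_ord j)) inord_val.
rewrite negb_and => /orP [nb|na].
  exists (\row_(j < 3) (if vb m (j.*2.+1) then -1 else 1))%R, 1%R; split.
    apply/negP => /eqP/rowP /(_ ord0); rewrite !mxE.
    by case: ifP => _ /eqP; rewrite ?oppr_eq0 oner_eq0.
  move=> i; rewrite Vset_enc dot_vert mxE => vi.
  have hl := half6 (ltn_ord i).
  rewrite inordK //.
  move: vi; rewrite [in vb m i](oddhalf i); case: (odd i) => /= vi.
    by rewrite vi mulrNN mulr1.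
  case: ifP => h; rewrite ?mulr1 //.
  by move/hasPn: nb => /(_ (i./2)); rewrite mem_iota hl /= vi h => /(_ isT).
have [j jl hj] : exists2 j, j < 3 & ~~ vb m j.*2 && ~~ vb m j.*2.+1.
  move: na; rewrite -has_predC => /hasP [j]; rewrite mem_iota /= negb_or => jl hj.
  by exists j.
exists (\row_(l < 3) (if (l : nat) == j then 1 else 0))%R, 0%R; split.
  apply/negP => /eqP/rowP /(_ (inord j)); rewrite !mxE inordK // eqxx.
  by move/eqP; rewrite oner_eq0.
move=> i; rewrite Vset_enc dot_vert mxE => vi.
have hl := half6 (ltn_ord i).
rewrite inordK //; case: eqP => h; rewrite ?mulr0 //.
move: vi hj; rewrite [in vb m i](oddhalf i) h; case: (odd i) => /= vi; rewrite vi ?andbF //.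
Qed.

Lemma io_enc (R : realType) m : size m = 12 -> incomplete_open R (enc m) <-> good m.
Proof.
move=> sm; rewrite /incomplete_open /good -enc0 // -(encT sm).
split.
  case=> _ -> -> /conn_enc -> np /=; apply/negPn/negP => h.
  by apply: np; apply/planar_enc.
case/and4P => h1 h2 h3 h4; split => //; first exact: enc_sub.
  exact/conn_enc.
by move/planar_enc; rewrite h4.
Qed.

Local Open Scope ring_scope.
Lemma det22 (R : comNzRingType) (B : 'M[R]_2) : \det B = B 0 0 * B 1 1 - B 0 1 * B 1 0.
Proof.
rewrite (expand_det_row _ 0) !big_ord_recr big_ord0 /= add0r /cofactor !det_mx11 !mxE /=.
have -> : widen_ord (leqnSn 1) ord_max = 0 :> 'I_2 by apply: val_inj.
have -> : (ord_max : 'I_2) = 1 by apply: val_inj.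
have -> : lift 0 0 = 1 :> 'I_2 by apply: val_inj.
have -> : lift 1 0 = 0 :> 'I_2 by apply: val_inj.
rewrite expr0 expr1 !mul1r mulN1r; ring.
Qed.

Lemma det33' (R : comNzRingType) (a : nat -> nat -> R) : \det (\matrix_(i < 3, j < 3) a i j) = d33 a.
Proof.
rewrite (expand_det_row _ 0) !big_ord_recr big_ord0 /= add0r /cofactor !det22 !mxE /=.
rewrite /d33 /=. rewrite !expr0 !expr1 /=. ring.
Qed.

Lemma det33 (R : comNzRingType) (A : 'M[R]_3) : \det A = d33 (fun i j => A (inord i) (inord j)).
Proof.
rewrite -det33'; congr (\det _); apply/matrixP => i j; by rewrite mxE !inord_val.
Qed.

Lemma dotvz (R : realType) a a' : (a < 6)%N -> (a' < 6)%N ->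
  \sum_(l < 3) vz R a l * vz R a' l = if a == a' then 1 else if a./2 == a'./2 then -1 else 0.
Proof.
move=> ha ha'; rewrite !big_ord_recr big_ord0 /=.
do 6?[case: a ha => [|a] ha //]; do 6?[case: a' ha' => [|a'] ha' //]; rewrite /vz /=; lra.
Qed.

Lemma sumsq (R : realType) a a' : (a < 6)%N -> (a' < 6)%N -> a != a' ->
  \sum_(l < 3) ((vz R a l - vz R a' l) / 2) ^+ 2 = 1 -> a./2 == a'./2.
Proof.
move=> ha ha'; rewrite !big_ord_recr big_ord0 /=.
do 6?[case: a ha => [|a] ha //]; do 6?[case: a' ha' => [|a'] ha' //]; rewrite /vz /= => _; lra.
Qed.

Local Close Scope ring_scope.

Definition tab (g : {perm 'I_6}) : seq nat := [seq val (g i) | i <- enum 'I_6].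

Lemma nth_tab g (i : 'I_6) : nth 0 (tab g) i = g i.
Proof. by rewrite (nth_map ord0) ?size_enum_ord ?ltn_ord // nth_ord_enum. Qed.

Lemma nth_tabn g a : a < 6 -> nth 0 (tab g) a = g (inord a).
Proof. by move=> h; rewrite -nth_tab inordK. Qed.

Lemma tab_perm g : tab g \in permutations (iota 0 6).
Proof.
rewrite mem_permutations; apply: uniq_perm.
- rewrite map_inj_uniq ?enum_uniq // => i j /val_inj; exact: perm_inj.
- exact: iota_uniq.
move=> x; rewrite mem_iota /=; apply/mapP/idP => [[i _ ->]|h]; first exact: ltn_ord.
by exists ((g^-1)%g (Ordinal h)); rewrite ?mem_enum // permKV.
Qed.

Definition Mf (R : realType) (f : seq nat) : 'M[R]_3 := \matrix_(k < 3, l < 3) vz R (nth 0 f k.*2) l.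

Lemma vzE (R : realType) a l : vz R a l = ((vz int a l)%:~R)%R.
Proof. by rewrite /vz; case: ifP => _ //; case: odd. Qed.

Lemma detMf (R : realType) f : (\det (Mf R f) = (detZ f)%:~R)%R.
Proof.
rewrite det33 /d33 /detZ !mxE !inordK // !vzE.
by rewrite !intrB !intrD !intrM.
Qed.

Lemma vM (R : realType) (M : 'M[R]_3) (i : 'I_6) l :
  ((oct_vert R i *m M) 0 l = (if odd i then -1 else 1) * M (inord (i./2)) l)%R.
Proof.
have hl := half6 (ltn_ord i).
rewrite mxE (bigD1 (inord (i./2))) //= big1 ?addr0 => [|k hk].
  by rewrite vert_entry /vz inordK // eqxx.
rewrite vert_entry /vz; case: eqP => [hk'|]; last by rewrite mul0r.
by move: hk; rewrite -hk' inord_val eqxx.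
Qed.

Lemma xor_lemma a a' : a < 6 -> a' < 6 -> a != a' -> a./2 == a'./2 -> a' = xor1 a.
Proof. by do 6?[case: a => [|a]] => //; do 6?[case: a' => [|a']]. Qed.

Lemma vz_xor (R : realType) a l : a < 6 -> vz R (xor1 a) l = (- vz R a l)%R.
Proof.
rewrite /vz /xor1; do 6?[case: a => [|a]] => //= _; case: eqP => _; rewrite ?opprK ?oppr0 //.
Qed.

Lemma half_dbl k : (k.*2)./2 = k. Proof. exact: doubleK. Qed.
Lemma half_dbl1 k : (k.*2.+1)./2 = k. Proof. by rewrite -[k.*2.+1]/(true + k.*2) half_bit_double. Qed.

Lemma rot_char (R : realType) g : is_rotation R g <-> tab g \in glc.
Proof.
rewrite -gl_eq mem_filter tab_perm andbT.
have bnd (k : nat) : k < 3 -> k.*2 < 6 /\ k.*2.+1 < 6 by rewrite -addnn; lia.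
have tabb a : a < 6 -> nth 0 (tab g) a < 6 by move=> h; rewrite nth_tabn // ltn_ord.
split.
  case=> M [b [hM hdet hv]].
  have E (i : 'I_6) l : ((if odd i then -1 else 1) * M (inord (i./2)) l + b 0 l = vz R (g i) l)%R.
    by have := congr1 (fun A : 'M[R]_(1,3) => A 0%R l) (hv i); rewrite mxE vM vert_entry.
  have key k : k < 3 -> [/\ val (g (inord k.*2.+1)) = xor1 (g (inord k.*2)),
      forall l, b 0%R l = 0%R & forall l, M (inord k) l = vz R (g (inord k.*2)) l].
    move=> kl; have [b0 b1] := bnd k kl.
    set a := g (inord k.*2); set a' := g (inord k.*2.+1).
    have E0 l := E (inord k.*2) l; have E1 l := E (inord k.*2.+1) l.
    rewrite !inordK // in E0 E1.
    rewrite half_dbl odd_double in E0; rewrite half_dbl1 /= odd_double in E1.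
    have Mk l : M (inord k) l = ((vz R a l - vz R a' l) / 2)%R.
      by have := E0 l; have := E1 l; rewrite /= mul1r mulN1r => h1 h0; lra.
    have norm : (\sum_(l < 3) ((vz R a l - vz R a' l) / 2) ^+ 2 = 1)%R.
      have := congr1 (fun A : 'M[R]_3 => A (inord k) (inord k)) hM; rewrite !mxE eqxx /= => h; apply: etrans h.
      by apply: eq_bigr => l _; rewrite !mxE Mk expr2.
    have aa' : val a != val a'.
      apply/eqP => /val_inj /perm_inj /(congr1 val) /=; rewrite !inordK //.
      by move/eqP; rewrite -addnn; lia.
    have xa := xor_lemma (ltn_ord a) (ltn_ord a') aa' (sumsq (ltn_ord a) (ltn_ord a') aa' norm).
    have va l : vz R a' l = (- vz R a l)%R by rewrite xa vz_xor.
    split => // l.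
      by have := E0 l; have := E1 l; rewrite /= mul1r mulN1r va => h1 h0; lra.
    by rewrite Mk va; lra.
  apply/andP; split.
    apply/allP => k; rewrite mem_iota /= => kl; have [b0 b1] := bnd k kl.
    by rewrite !nth_tabn //; case: (key k kl) => -> _ _.
  have eM : M = Mf R (tab g).
    apply/matrixP => k l; have [b0 b1] := bnd k (ltn_ord k).
    by rewrite mxE nth_tabn // -(inord_val k); case: (key k (ltn_ord k)) => _ _ ->; rewrite inord_val.
  move: hdet; rewrite eM detMf => h; apply/eqP; apply: (@intr_inj R); by rewrite h.
case/andP => ha /eqP hd.
have anti k : k < 3 -> nth 0 (tab g) k.*2.+1 = xor1 (nth 0 (tab g) k.*2).
  by move=> kl; move/allP: ha => /(_ k); rewrite mem_iota /= => /(_ kl) /eqP.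
exists (Mf R (tab g)), 0%R; split.
- apply/matrixP => k k'; rewrite !mxE.
  have [b0 b1] := bnd k (ltn_ord k); have [b0' b1'] := bnd k' (ltn_ord k').
  under eq_bigr => l _ do rewrite !mxE.
  rewrite dotvz ?tabb //.
  case: (eqVneq k k') => [<-|nkk]; first by rewrite eqxx.
  have ne : nth 0 (tab g) k.*2 != nth 0 (tab g) k'.*2.
    rewrite !nth_tabn //; apply/eqP => /val_inj /perm_inj /(congr1 val) /=; rewrite !inordK //.
    by move/eqP; rewrite -!addnn => h; move: nkk; rewrite -val_eqE /=; lia.
  rewrite (negbTE ne); case: ifP => // hh.
  have := xor_lemma (tabb _ b0) (tabb _ b0') ne hh; rewrite -anti ?ltn_ord //.
  rewrite !nth_tabn // => /val_inj /perm_inj /(congr1 val) /=; rewrite !inordK //.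
  by rewrite -!addnn; lia.
- by rewrite detMf hd.
move=> i; apply/rowP => l; rewrite [LHS]mxE vM vert_entry !mxE addr0.
have hl := half6 (ltn_ord i).
have [b0 b1] := bnd _ hl.
rewrite inordK //.
have gi : val (g i) = nth 0 (tab g) (odd i + (i./2).*2) by rewrite -oddhalf nth_tab.
rewrite gi; case: (odd i) => /=.
  by rewrite anti // vz_xor ?tabb // mulN1r.
by rewrite mul1r.
Qed.

Lemma glc_ok : all (fun f => [&& size f == 6, uniq f, all (fun x => x < 6) f &
   all (fun i => all (fun j => (i./2 != j./2) ==> ((nth 0 f i)./2 != (nth 0 f j)./2)) (iota 0 6)) (iota 0 6)]) glc.
Proof. by []. Qed.

Lemma perm_of f : f \in glc -> exists g : {perm 'I_6}, tab g = f.
Proof.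
move/(allP glc_ok) => /and4P [/eqP sf uf /allP bf _].
have hb (i : 'I_6) : nth 0 f i < 6 by apply: bf; apply: mem_nth; rewrite sf.
have hinj : injective (fun i : 'I_6 => inord (nth 0 f i) : 'I_6).
  move=> i j /(congr1 val) /=; rewrite !inordK // => /eqP.
  by rewrite nth_uniq ?sf // => /eqP /val_inj.
exists (perm hinj); apply: (@eq_from_nth _ 0); first by rewrite size_map size_enum_ord sf.
move=> a; rewrite size_map size_enum_ord => al.
rewrite nth_tabn // permE /= inordK //; by rewrite inordK.
Qed.

Lemma ap_glc g (i j : 'I_6) : tab g \in glc -> i./2 != j./2 -> (g i)./2 != (g j)./2.
Proof.
move/(allP glc_ok) => /and4P [_ _ _ /allP h] hij.
have := h i; rewrite mem_iota ltn_ord => /(_ isT) /allP /(_ j); rewrite mem_iota ltn_ord => /(_ isT).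
by rewrite hij !nth_tab.
Qed.

Lemma imset2' (g : {perm 'I_6}) (i j : 'I_6) : g @: [set i; j] = [set g i; g j].
Proof. by rewrite imsetU1 imset_set1. Qed.

Lemma nth_actf f m (x y : 'I_6) : x./2 != y./2 ->
  nth false (actf f m) (eidx x y) =
  has (fun q => samepair (nth 0 f q.1, nth 0 f q.2) (minn x y, maxn x y)) [seq q <- pairs | adjb m q.1 q.2].
Proof.
move=> h; have [h1 h2] := eidx_ok (ltn_ord x) (ltn_ord y) h.
by rewrite /actf (nth_map (0,0)) ?size_pairs // h2.
Qed.

Lemma sp_minmax (a b c d : nat) : samepair (a, b) (minn c d, maxn c d) = samepair (a, b) (c, d).
Proof.
rewrite /samepair /=; case: (leqP c d) => h //.
by rewrite orbC.
Qed.

Lemma sp_set (a b c d : 'I_6) : samepair (val a, val b) (val c, val d) -> [set a; b] = [set c; d].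
Proof.
rewrite /samepair /= => /orP [] /andP [/eqP /val_inj -> /eqP /val_inj ->] //.
exact: setUC.
Qed.

Lemma act_enc g m : tab g \in glc -> act_edges g (enc m) = enc (actf (tab g) m).
Proof.
move=> hg; apply/setP => e; rewrite /act_edges; apply/imsetP/encP.
  case=> e0 /encP [i [j [-> hij]]] ->; exists (g i), (g j); split; first exact: imset2'.
  have ha := ap_glc hg (adjb_lt hij).
  rewrite /adjb ha nth_actf //; apply/hasP.
  have [h1 h2] := eidx_ok (ltn_ord i) (ltn_ord j) (adjb_lt hij).
  exists (minn i j, maxn i j).
    by rewrite mem_filter /= adjb_minmax hij -h2 mem_nth.
  rewrite sp_minmax /= /samepair /=.
  by case: (leqP i j) => h; rewrite ?(minn_idPl h) ?(maxn_idPr h) ?(minn_idPr (ltnW h)) ?(maxn_idPl (ltnW h)) !nth_tab !eqxx ?orbT.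
case=> x [y [-> /andP [hxy]]]; rewrite nth_actf // => /hasP [q].
rewrite mem_filter => /andP [hq qp]; have /and3P [q1 q2 _] := pairs_ok qp.
rewrite sp_minmax => sp.
exists [set (inord q.1 : 'I_6); inord q.2].
  by rewrite in_enc !inordK.
rewrite imset2'; symmetry; apply: sp_set => /=; rewrite -!nth_tab !inordK //.
Qed.

Lemma orbitP (R : realType) m T :
  reflect (exists2 f, f \in glc & T = enc (actf f m)) (T \in rot_orbit R (enc m)).
Proof.
apply: (iffP imsetP) => [[g]|[f fg ->]].
  rewrite inE asboolE => /rot_char hg ->; exists (tab g) => //; exact: act_enc.
have [g tg] := perm_of fg.
exists g; last by rewrite act_enc tg.
by rewrite inE asboolE; apply/rot_char; rewrite tg.
Qed.

Lemma size_actf f m : size (actf f m) = 12.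
Proof. by rewrite size_map. Qed.

Section LexP.
Variables (T : eqType) (r : rel T).
Hypotheses (rtot : total r) (rtr : transitive r) (ranti : antisymmetric r).

Lemma lexr_total : total (lexr r).
Proof.
elim=> [|a s IH] [|b t] //=; rewrite eq_sym.
by case: eqP => _; [apply: IH | apply: rtot].
Qed.

Lemma lexr_anti : antisymmetric (lexr r).
Proof.
elim=> [|a s IH] [|b t] //=; rewrite eq_sym.
case: eqP => [-> /IH -> //|nab /ranti eab]; by case: nab.
Qed.

Lemma lexr_trans : transitive (lexr r).
Proof.
move=> y x z; elim: x y z => [|a s IH] [|b t] [|c u] //=.
have [eab|nab] := eqVneq a b; have [eac|nac] := eqVneq a c.
- by subst; rewrite eqxx; apply: IH.
- by subst; rewrite (negbTE nac).
- subst; rewrite eq_sym (negbTE nab) => h1 h2; case/negP: nab.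
  by apply/eqP/ranti; rewrite h1 h2.
- have [ebc|nbc] := eqVneq b c; first by subst; rewrite ?(negbTE nab) ?(negbTE nac) ?eqxx.
  move=> h1 h2; exact: rtr h1 h2.
Qed.
End LexP.

Lemma implb_total : total implb. Proof. by do 2 case. Qed.
Lemma implb_trans : transitive implb. Proof. by do 3 case. Qed.
Lemma implb_anti : antisymmetric implb. Proof. by do 2 case. Qed.

Lemma lexb_total : total lexb. Proof. exact: lexr_total implb_total. Qed.
Lemma lexb_trans : transitive lexb. Proof. exact: lexr_trans implb_trans implb_anti. Qed.
Lemma lexb_anti : antisymmetric lexb. Proof. exact: lexr_anti implb_anti. Qed.

Lemma mem_adjd (T : eqType) (s : seq T) : adjd s =i s.
Proof.
elim: s => [|x s IH] //; case: s IH => [|y s] IH //= z.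
case: eqP => [e|_]; first by rewrite IH -e !inE orbA orbb.
by rewrite inE IH.
Qed.

Lemma uniq_adjd (T : eqType) (r : rel T) (rtr : transitive r) (ranti : antisymmetric r) s :
  sorted r s -> uniq (adjd s).
Proof.
elim: s => [|x s IH] //; case: s IH => [|y s] IH //= /andP [rxy ps].
case: eqP => [_|nxy]; first exact: IH ps.
rewrite cons_uniq IH // andbT; change (x \notin adjd (y :: s)); rewrite mem_adjd inE.
apply/negP => /orP [/eqP //|xs].
have := order_path_min rtr ps => /allP /(_ x xs) ryx.
by apply: nxy; apply: ranti; rewrite rxy ryx.
Qed.

Lemma size_undup_adjd (T : eqType) (r : rel T) s : total r -> transitive r -> antisymmetric r ->
  size (undup s) = size (adjd (sort r s)).
Proof.
move=> rtot rtr ranti; apply: perm_size; apply: uniq_perm.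
- exact: undup_uniq.
- by apply: (uniq_adjd rtr ranti); apply: sort_sorted.
by move=> z; rewrite mem_undup mem_adjd mem_sort.
Qed.

Lemma card_list (U : finType) (A : {set U}) (l : seq U) : A =i l -> #|A| = size (undup l).
Proof.
move=> E; rewrite cardE; apply: perm_size; apply: uniq_perm.
- exact: enum_uniq.
- exact: undup_uniq.
by move=> z; rewrite mem_enum mem_undup E.
Qed.

Lemma undup_map_eq (T U K : eqType) (h : T -> U) (c : T -> K) s :
  {in s &, forall x y, (h x == h y) = (c x == c y)} ->
  size (undup (map h s)) = size (undup (map c s)).
Proof.
elim: s => [|x s IH] //= H.
have H' : {in s &, forall x y, (h x == h y) = (c x == c y)}.
  by move=> a b ha hb; apply: H; rewrite inE ?ha ?hb orbT.
have -> : (h x \in map h s) = (c x \in map c s).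
  rewrite -!has_pred1 !has_map; apply: eq_in_has => y ys /=.
  by rewrite /= eq_sym H ?inE ?eqxx ?ys ?orbT // eq_sym.
by case: (c x \in map c s) => //=; rewrite IH.
Qed.


Lemma sortundupP (A A' : seq (seq bool)) :
  reflect (A =i A') (sort lexb (undup A) == sort lexb (undup A')).
Proof.
apply: (iffP eqP) => [E z|E].
  have P := introT (perm_sortP lexb_total lexb_trans lexb_anti (undup A) (undup A')) E.
  by rewrite -mem_undup (perm_mem P) mem_undup.
apply: (elimT (perm_sortP lexb_total lexb_trans lexb_anti (undup A) (undup A'))).
by apply: uniq_perm; rewrite ?undup_uniq // => z; rewrite !mem_undup E.
Qed.

Local Opaque actf glc.

Lemma orb_eq (R : realType) m m' : size m = 12 -> size m' = 12 ->
  (rot_orbit R (enc m) == rot_orbit R (enc m')) = (cc m == cc m').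
Proof.
move=> sm sm'.
have one n n' : size n = 12 -> size n' = 12 -> rot_orbit R (enc n) = rot_orbit R (enc n') ->
    {subset [seq actf f n | f <- glc] <= [seq actf f n' | f <- glc]}.
  move=> sn sn' E x /mapP [f fg ->].
  have : enc (actf f n) \in rot_orbit R (enc n') by rewrite -E; apply/orbitP; exists f.
  case/orbitP => f' fg' /enc_inj; rewrite !size_actf => /(_ erefl erefl) ->.
  exact: (map_f (fun f => actf f n') fg').
rewrite /cc; apply/eqP/sortundupP => [E z|AA'].
  by apply/idP/idP; [exact: (one m m') | exact: (one m' m)].
apply/setP => T; apply/orbitP/orbitP => [[f fg ->]|[f fg ->]].
  have : actf f m \in [seq actf f m' | f <- glc] by rewrite -AA'; exact: (map_f (fun f => actf f m) fg).
  by case/mapP => f' fg' ->; exists f'.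
have : actf f m' \in [seq actf f m | f <- glc] by rewrite AA'; exact: (map_f (fun f => actf f m') fg).
by case/mapP => f' fg' ->; exists f'.
Qed.

Local Transparent actf glc.



Lemma count185 : size (adjd (sort (lexr lexb) [seq cc m | m <- [seq m <- allbl 12 | good m]])) = 185.
Proof. vm_compute. reflexivity. Qed.

Theorem mainTheorem3 (R : realType) :
  #|[set rot_orbit R S | S in incomplete_opens R]| = 185.
Proof.
set s := [seq m <- allbl 12 | good m].
have s12 m : m \in s -> size m = 12 by rewrite mem_filter mem_allbl => /andP [_ /eqP].
have E : [set rot_orbit R S | S in incomplete_opens R] =i [seq rot_orbit R (enc m) | m <- s].
  move=> T; apply/imsetP/mapP => [[S]|[m ms ->]].
    rewrite inE asboolE => hS ->.
    have sub : S \subset oct_edges by case: hS.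
    exists (mask S); last by rewrite enc_mask.
    rewrite mem_filter mem_allbl size_mask eqxx andbT.
    by apply/(io_enc R (size_mask S)); rewrite enc_mask.
  exists (enc m) => //; rewrite inE asboolE.
  by apply/(io_enc R (s12 m ms)); move: ms; rewrite mem_filter => /andP [].
rewrite (card_list E) (@undup_map_eq _ _ _ _ cc).
  rewrite (size_undup_adjd _ (lexr_total lexb_total) (lexr_trans lexb_trans lexb_anti) (lexr_anti lexb_anti)).
  exact: count185.
move=> m m' ms ms'; exact: orb_eq (s12 m ms) (s12 m' ms').
Qed.
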